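(* Let $\mathcal T$ be a theory of $\mathsf{LGI}$, let $\alpha,\beta$ be basic expressions and $c,d\in[0,1]$. If every element of $\tau(\alpha,c)$ and every element of $\tau(\beta,d)$ is provable from $\mathcal T$ in $\mathsf{LGI}$, then so is every element of each of the sets $\tau(\alpha\land\beta,\min(c,d))$, $\tau(\alpha\lor\beta,\max(c,d))$, $\tau(\alpha\odot\beta,c\odot d)$ and $\tau(\sim\alpha,1-c)$.
   Context: Fix a continuous t-norm $\odot$ on $[0,1]$ and let $c\oplus d = 1-((1-c)\odot(1-d))$. Write $c\odot_{\L} d=\max(c+d-1,0)$, $c\oplus_{\L} d=\min(c+d,1)$. Syntax of $\mathsf{LGI}$: countably many variables $\phi_0,\phi_1,\dots$ and constants $\bot,\top$. Basic expressions are built from variables and constants by binary $\land,\lor,\odot$ and unary $\sim$. A graded implication is written $\alpha\Rightarrow_c\beta$ with $\alpha,\beta$ basic expressions, $c\in[0,1]$. Formulas are built from graded implications by classical $\land,\lor,\lnot$; $\Phi\to\Psi$ abbreviates $\lnot\Phi\lor\Psi$. A theory is a set of formulas. For a basic expression $\alpha$ and $c\in[0,1]$, $\tau(\alpha,c)=\{\top\Rightarrow_t\alpha : t\in[0,1],\ t<c\}\cup\{\alpha\Rightarrow_{1-t}\bot : t\in[0,1],\ t>c\}$. Calculus $\mathsf{LGI}$: axioms are (i) all substitution instances (by graded implications) of classical propositional tautologies; (ii) for all basic expressions $\alpha,\beta,\gamma$ and $c,d\in[0,1]$: ($\land_1$) $(\alpha\Rightarrow_d\beta)\land(\alpha\Rightarrow_d\gamma)\to(\alpha\Rightarrow_d\beta\land\gamma)$;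 ($\land_2$) $\alpha\land\beta\Rightarrow_1\alpha$; ($\land_3$) $\alpha\land\beta\Rightarrow_1\beta$; ($\lor_1$) $(\alpha\Rightarrow_d\gamma)\land(\beta\Rightarrow_d\gamma)\to(\alpha\lor\beta\Rightarrow_d\gamma)$; ($\lor_2$) $\alpha\Rightarrow_1\alpha\lor\beta$; ($\lor_3$) $\beta\Rightarrow_1\alpha\lor\beta$; ($\odot_1$) $(\top\Rightarrow_c\alpha)\land(\top\Rightarrow_d\beta)\to(\top\Rightarrow_{c\odot d}\alpha\odot\beta)$; ($\odot_2$) $(\alpha\Rightarrow_c\bot)\land(\beta\Rightarrow_d\bot)\to(\alpha\odot\beta\Rightarrow_{c\oplus d}\bot)$; ($\odot_3$) $\top\Rightarrow_1\top\odot\top$; ($\sim_1$) $(\alpha\Rightarrow_d\beta)\to(\sim\beta\Rightarrow_d\sim\alpha)$; ($\sim_2$) $\sim\sim\alpha\Rightarrow_1\alpha$; ($\sim_3$) $\alpha\Rightarrow_1\sim\sim\alpha$; ($\top$) $\alpha\Rightarrow_1\top$; ($\bot$) $\bot\Rightarrow_1\alpha$; (0) $\alpha\Rightarrow_0\beta$; ($c$) $\alpha\Rightarrow_c\alpha$; (inkons) $\lnot(\top\Rightarrow_c\bot)$ for $c>0$; (trans$_1$) $(\alpha\Rightarrow_c\beta)\land(\beta\Rightarrow_d\gamma)\to(\alpha\Rightarrow_{c\odot_{\L}d}\gamma)$; (trans$_2$) $(\alpha\Rightarrow_c\bot)\land(\top\Rightarrow_d\beta)\to(\alpha\Rightarrow_{c\oplus_{\L}d}\beta)$;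 (lin$_1$) $(\alpha\Rightarrow_1\beta)\lor(\beta\Rightarrow_1\alpha)$; (lin$_2$) $(\top\Rightarrow_d\alpha)\lor(\alpha\Rightarrow_{1-d}\bot)$. The only rule is modus ponens. $\mathcal T\vdash_{\mathsf{LGI}}\Phi$ means $\Phi$ has a finite derivation from axioms and elements of $\mathcal T$ by modus ponens. *)

(* Defs.v *)
From Stdlib Require Import Reals Lra.
Open Scope R_scope.

Record I01 : Type := mkI01 {
  ival : R;
  ival_ge0 : 0 <= ival;
  ival_le1 : ival <= 1 }.

Record ctnorm : Type := mkCtnorm {
  tn : R -> R -> R;
  tn_range : forall x y, 0 <= x <= 1 -> 0 <= y <= 1 -> 0 <= tn x y <= 1;
  tn_comm : forall x y, 0 <= x <= 1 -> 0 <= y <= 1 -> tn x y = tn y x;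
  tn_assoc : forall x y z, 0 <= x <= 1 -> 0 <= y <= 1 -> 0 <= z <= 1 ->
      tn x (tn y z) = tn (tn x y) z;
  tn_mono : forall x x' y, 0 <= x <= 1 -> 0 <= x' <= 1 -> 0 <= y <= 1 ->
      x <= x' -> tn x y <= tn x' y;
  tn_unit : forall x, 0 <= x <= 1 -> tn x 1 = x;
  tn_cont : forall x y, 0 <= x <= 1 -> 0 <= y <= 1 ->
      forall eps, 0 < eps -> exists delta, 0 < delta /\
        forall x' y', 0 <= x' <= 1 -> 0 <= y' <= 1 ->
          Rabs (x - x') < delta -> Rabs (y - y') < delta ->
          Rabs (tn x y - tn x' y') < eps }.

Lemma ival_rng (c : I01) : 0 <= ival c <= 1.
Proof. destruct c; simpl; lra. Qed.

Definition I01_0 : I01 := mkI01 0 (Rle_refl 0) (Rle_0_1).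
Definition I01_1 : I01 := mkI01 1 (Rle_0_1) (Rle_refl 1).

Definition I01_compl (c : I01) : I01.
Proof. refine (mkI01 (1 - ival c) _ _); destruct c; simpl; lra. Defined.

Definition I01_min (c d : I01) : I01.
Proof.
  refine (mkI01 (Rmin (ival c) (ival d)) _ _); destruct c, d; simpl;
  unfold Rmin; destruct Rle_dec; lra.
Defined.

Definition I01_max (c d : I01) : I01.
Proof.
  refine (mkI01 (Rmax (ival c) (ival d)) _ _); destruct c, d; simpl;
  unfold Rmax; destruct Rle_dec; lra.
Defined.

Definition I01_tn (T : ctnorm) (c d : I01) : I01.
Proof.
  refine (mkI01 (tn T (ival c) (ival d)) _ _);
  pose proof (tn_range T (ival c) (ival d) (ival_rng c) (ival_rng d)); lra.
Defined.

Definition I01_tc (T : ctnorm) (c d : I01) : I01 :=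
  I01_compl (I01_tn T (I01_compl c) (I01_compl d)).

Definition I01_luk_and (c d : I01) : I01.
Proof.
  refine (mkI01 (Rmax (ival c + ival d - 1) 0) _ _);
  pose proof (ival_rng c); pose proof (ival_rng d);
  unfold Rmax; destruct Rle_dec; lra.
Defined.

Definition I01_luk_or (c d : I01) : I01.
Proof.
  refine (mkI01 (Rmin (ival c + ival d) 1) _ _);
  pose proof (ival_rng c); pose proof (ival_rng d);
  unfold Rmin; destruct Rle_dec; lra.
Defined.

Inductive bexp : Type :=
| BVar : nat -> bexp
| BBot : bexp
| BTop : bexp
| BAnd : bexp -> bexp -> bexp
| BOr : bexp -> bexp -> bexp
| BOdot : bexp -> bexp -> bexp
| BNeg : bexp -> bexp.

Inductive form : Type :=
| GI : bexp -> I01 -> bexp -> form     (* GI a c b  =  a ⇒_c b *)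
| FAnd : form -> form -> form
| FOr : form -> form -> form
| FNot : form -> form.

Definition FImp (P Q : form) : form := FOr (FNot P) Q.

Inductive pform : Type :=
| PVar : nat -> pform
| PAnd : pform -> pform -> pform
| POr : pform -> pform -> pform
| PNot : pform -> pform.

Fixpoint peval (v : nat -> bool) (p : pform) : bool :=
  match p with
  | PVar n => v n
  | PAnd p q => andb (peval v p) (peval v q)
  | POr p q => orb (peval v p) (peval v q)
  | PNot p => negb (peval v p)
  end.

Definition tautology (p : pform) : Prop := forall v, peval v p = true.

Fixpoint psubst (s : nat -> form) (p : pform) : form :=
  match p with
  | PVar n => s n
  | PAnd p q => FAnd (psubst s p) (psubst s q)
  | POr p q => FOr (psubst s p) (psubst s q)
  | PNot p => FNot (psubst s p)
  end.

Inductive LGI_prov (Tn : ctnorm) (Th : form -> Prop) : form -> Prop :=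
| ax_taut : forall p s, tautology p -> LGI_prov Tn Th (psubst s p)
| ax_and1 : forall a b g d,
    LGI_prov Tn Th (FImp (FAnd (GI a d b) (GI a d g)) (GI a d (BAnd b g)))
| ax_and2 : forall a b, LGI_prov Tn Th (GI (BAnd a b) I01_1 a)
| ax_and3 : forall a b, LGI_prov Tn Th (GI (BAnd a b) I01_1 b)
| ax_or1 : forall a b g d,
    LGI_prov Tn Th (FImp (FAnd (GI a d g) (GI b d g)) (GI (BOr a b) d g))
| ax_or2 : forall a b, LGI_prov Tn Th (GI a I01_1 (BOr a b))
| ax_or3 : forall a b, LGI_prov Tn Th (GI b I01_1 (BOr a b))
| ax_odot1 : forall a b c d,
    LGI_prov Tn Th (FImp (FAnd (GI BTop c a) (GI BTop d b))
                         (GI BTop (I01_tn Tn c d) (BOdot a b)))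
| ax_odot2 : forall a b c d,
    LGI_prov Tn Th (FImp (FAnd (GI a c BBot) (GI b d BBot))
                         (GI (BOdot a b) (I01_tc Tn c d) BBot))
| ax_odot3 : LGI_prov Tn Th (GI BTop I01_1 (BOdot BTop BTop))
| ax_neg1 : forall a b d,
    LGI_prov Tn Th (FImp (GI a d b) (GI (BNeg b) d (BNeg a)))
| ax_neg2 : forall a, LGI_prov Tn Th (GI (BNeg (BNeg a)) I01_1 a)
| ax_neg3 : forall a, LGI_prov Tn Th (GI a I01_1 (BNeg (BNeg a)))
| ax_top : forall a, LGI_prov Tn Th (GI a I01_1 BTop)
| ax_bot : forall a, LGI_prov Tn Th (GI BBot I01_1 a)
| ax_zero : forall a b, LGI_prov Tn Th (GI a I01_0 b)
| ax_refl : forall a c, LGI_prov Tn Th (GI a c a)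
| ax_inkons : forall c, 0 < ival c -> LGI_prov Tn Th (FNot (GI BTop c BBot))
| ax_trans1 : forall a b g c d,
    LGI_prov Tn Th (FImp (FAnd (GI a c b) (GI b d g)) (GI a (I01_luk_and c d) g))
| ax_trans2 : forall a b c d,
    LGI_prov Tn Th (FImp (FAnd (GI a c BBot) (GI BTop d b)) (GI a (I01_luk_or c d) b))
| ax_lin1 : forall a b, LGI_prov Tn Th (FOr (GI a I01_1 b) (GI b I01_1 a))
| ax_lin2 : forall a d,
    LGI_prov Tn Th (FOr (GI BTop d a) (GI a (I01_compl d) BBot))
| in_theory : forall P, Th P -> LGI_prov Tn Th P
| mp : forall P Q, LGI_prov Tn Th P -> LGI_prov Tn Th (FImp P Q) -> LGI_prov Tn Th Q.

Definition tau (a : bexp) (c : I01) (P : form) : Prop :=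
  (exists t : I01, ival t < ival c /\ P = GI BTop t a) \/
  (exists t : I01, ival t > ival c /\ P = GI a (I01_compl t) BBot).

(* Main.v *)
Require Import Defs.
From Stdlib Require Import Reals.
From Stdlib Require Import Lra ProofIrrelevance.

Lemma I01_eq (x y : I01) : ival x = ival y -> x = y.
Proof. destruct x, y; simpl; intros ->; f_equal; apply proof_irrelevance. Qed.

Lemma andI Tn Th P Q : LGI_prov Tn Th P -> LGI_prov Tn Th Q -> LGI_prov Tn Th (FAnd P Q).
Proof.
  intros HP HQ.
  pose (s := fun n : nat => match n with 0 => P | _ => Q end).
  assert (H := ax_taut Tn Th (POr (PNot (PVar 0)) (POr (PNot (PVar 1)) (PAnd (PVar 0) (PVar 1)))) s).
  assert (Ht : tautology (POr (PNot (PVar 0)) (POr (PNot (PVar 1)) (PAnd (PVar 0) (PVar 1))))).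
  { intro v; simpl; destruct (v 0%nat), (v 1%nat); reflexivity. }
  specialize (H Ht).
  exact (mp _ _ _ _ HQ (mp _ _ _ _ HP H)).
Qed.

Lemma mp2 Tn Th A B C : LGI_prov Tn Th A -> LGI_prov Tn Th B ->
  LGI_prov Tn Th (FImp (FAnd A B) C) -> LGI_prov Tn Th C.
Proof. intros HA HB H. exact (mp _ _ _ _ (andI _ _ _ _ HA HB) H). Qed.

Lemma GIeq Tn Th a x y b : LGI_prov Tn Th (GI a x b) -> ival y = ival x -> LGI_prov Tn Th (GI a y b).
Proof. intros H E. rewrite (I01_eq y x E). exact H. Qed.

Lemma trans Tn Th a b g x y z : LGI_prov Tn Th (GI a x b) -> LGI_prov Tn Th (GI b y g) ->
  ival z = ival x + ival y - 1 -> LGI_prov Tn Th (GI a z g).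
Proof.
  intros H1 H2 E.
  pose proof (mp2 _ _ _ _ _ H1 H2 (ax_trans1 Tn Th a b g x y)) as H.
  apply (GIeq _ _ _ _ _ _ H). simpl. pose proof (ival_rng z).
  rewrite Rmax_left; lra.
Qed.

Lemma weaken Tn Th a x y b : LGI_prov Tn Th (GI a x b) -> ival y <= ival x -> LGI_prov Tn Th (GI a y b).
Proof.
  intros H L.
  pose proof (ival_rng x); pose proof (ival_rng y).
  assert (p1 : 0 <= 1 - ival x + ival y) by lra.
  assert (p2 : 1 - ival x + ival y <= 1) by lra.
  apply (trans _ _ _ _ _ x (mkI01 _ p1 p2) y H (ax_refl _ _ _ _)). simpl; lra.
Qed.

Lemma tn_zero Tn x : 0 <= x <= 1 -> tn Tn 0 x = 0.
Proof.
  intros Hx.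
  assert (R01 : 0 <= 0 <= 1) by lra. assert (R11 : 0 <= 1 <= 1) by lra.
  pose proof (tn_range Tn 0 x R01 Hx).
  rewrite (tn_comm Tn 0 x R01 Hx).
  pose proof (tn_mono Tn x 1 0 Hx R11 R01 (proj2 Hx)).
  rewrite (tn_comm Tn 1 0 R11 R01), (tn_unit Tn 0 R01) in H0.
  rewrite (tn_comm Tn 0 x R01 Hx) in H. lra.
Qed.

Theorem mainTheorem3 (Tn : ctnorm) (Th : form -> Prop) (a b : bexp) (c d : I01) :
  (forall P, tau a c P -> LGI_prov Tn Th P) ->
  (forall P, tau b d P -> LGI_prov Tn Th P) ->
  (forall P, tau (BAnd a b) (I01_min c d) P -> LGI_prov Tn Th P) /\
  (forall P, tau (BOr a b) (I01_max c d) P -> LGI_prov Tn Th P) /\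
  (forall P, tau (BOdot a b) (I01_tn Tn c d) P -> LGI_prov Tn Th P) /\
  (forall P, tau (BNeg a) (I01_compl c) P -> LGI_prov Tn Th P).
Proof.
  intros HA HB.
  assert (A1 : forall t, ival t < ival c -> LGI_prov Tn Th (GI BTop t a)).
  { intros t Ht; apply HA; left; exists t; auto. }
  assert (B1 : forall t, ival t < ival d -> LGI_prov Tn Th (GI BTop t b)).
  { intros t Ht; apply HB; left; exists t; auto. }
  assert (A2 : forall x, ival x < 1 - ival c \/ ival x = 0 -> LGI_prov Tn Th (GI a x BBot)).
  { intros x [Hx|Hx].
    - apply (GIeq _ _ _ (I01_compl (I01_compl x))). apply HA; right; exists (I01_compl x).
      split; simpl; [lra|reflexivity]. simpl; lra.
    - apply (GIeq _ _ _ I01_0). apply ax_zero. simpl; lra. }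
  assert (B2 : forall x, ival x < 1 - ival d \/ ival x = 0 -> LGI_prov Tn Th (GI b x BBot)).
  { intros x [Hx|Hx].
    - apply (GIeq _ _ _ (I01_compl (I01_compl x))). apply HB; right; exists (I01_compl x).
      split; simpl; [lra|reflexivity]. simpl; lra.
    - apply (GIeq _ _ _ I01_0). apply ax_zero. simpl; lra. }
  pose proof (ival_rng c) as Rc. pose proof (ival_rng d) as Rd.
  split; [|split; [|split]]; intros P [[t [Ht ->]]|[t [Ht ->]]]; simpl in Ht;
    pose proof (ival_rng t) as Rt.
  -
    apply (mp2 _ _ _ _ _ (A1 t ltac:(unfold Rmin in Ht; destruct Rle_dec; lra))
             (B1 t ltac:(unfold Rmin in Ht; destruct Rle_dec; lra)) (ax_and1 _ _ _ _ _ _)).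
  -
    unfold Rmin in Ht; destruct Rle_dec.
    + apply (trans _ _ _ a _ I01_1 (I01_compl t) _ (ax_and2 _ _ _ _)
             (A2 (I01_compl t) ltac:(left; simpl; lra))). simpl; lra.
    + apply (trans _ _ _ b _ I01_1 (I01_compl t) _ (ax_and3 _ _ _ _)
             (B2 (I01_compl t) ltac:(left; simpl; lra))). simpl; lra.
  -
    unfold Rmax in Ht; destruct Rle_dec.
    + apply (trans _ _ _ b _ t I01_1 _ (B1 t ltac:(lra)) (ax_or3 _ _ _ _)). simpl; lra.
    + apply (trans _ _ _ a _ t I01_1 _ (A1 t ltac:(lra)) (ax_or2 _ _ _ _)). simpl; lra.
  -
    unfold Rmax in Ht; destruct Rle_dec.
    + apply (mp2 _ _ _ _ _ (A2 (I01_compl t) ltac:(left; simpl; lra)) (B2 (I01_compl t) ltac:(left; simpl; lra))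
             (ax_or1 _ _ _ _ _ _)).
    + apply (mp2 _ _ _ _ _ (A2 (I01_compl t) ltac:(left; simpl; lra)) (B2 (I01_compl t) ltac:(left; simpl; lra))
             (ax_or1 _ _ _ _ _ _)).
  -
    assert (cpos : 0 < ival c).
    { destruct (Rle_lt_dec (ival c) 0) as [h|h]; [|exact h].
      assert (E : ival c = 0) by lra. rewrite E, tn_zero in Ht by lra. lra. }
    assert (dpos : 0 < ival d).
    { destruct (Rle_lt_dec (ival d) 0) as [h|h]; [|exact h].
      assert (E : ival d = 0) by lra.
      rewrite (tn_comm Tn _ _ Rc Rd), E, tn_zero in Ht by lra. lra. }
    destruct (tn_cont Tn _ _ Rc Rd (tn Tn (ival c) (ival d) - ival t) ltac:(lra)) as [del [Hdel Hc]].
    set (m := Rmin del (Rmin (ival c) (ival d))).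
    assert (m1 : m <= del) by apply Rmin_l.
    assert (m2 : m <= ival c) by (unfold m; pose proof (Rmin_r del (Rmin (ival c) (ival d)));
       pose proof (Rmin_l (ival c) (ival d)); lra).
    assert (m3 : m <= ival d) by (unfold m; pose proof (Rmin_r del (Rmin (ival c) (ival d)));
       pose proof (Rmin_r (ival c) (ival d)); lra).
    assert (m0 : 0 < m) by (unfold m; repeat apply Rmin_glb_lt; lra).
    assert (p1 : 0 <= ival c - m/2) by lra. assert (p2 : ival c - m/2 <= 1) by lra.
    assert (q1 : 0 <= ival d - m/2) by lra. assert (q2 : ival d - m/2 <= 1) by lra.
    set (c' := mkI01 _ p1 p2). set (d' := mkI01 _ q1 q2).
    pose proof (mp2 _ _ _ _ _ (A1 c' ltac:(simpl; lra)) (B1 d' ltac:(simpl; lra))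
                 (ax_odot1 Tn Th a b c' d')) as H.
    apply (weaken _ _ _ _ _ _ H). simpl.
    assert (Hr := Hc (ival c - m/2) (ival d - m/2) ltac:(lra) ltac:(lra)
                   ltac:(apply Rabs_def1; lra) ltac:(apply Rabs_def1; lra)).
    apply Rabs_def2 in Hr. lra.
  -
    destruct (tn_cont Tn _ _ Rc Rd (ival t - tn Tn (ival c) (ival d)) ltac:(lra)) as [del [Hdel Hc]].
    assert (Hmc : forall x, 0 <= x <= 1 -> x <= Rmin (x + del/2) 1 <= 1 /\
              Rmin (x + del/2) 1 - x < del /\ (x < Rmin (x + del/2) 1 \/ Rmin (x + del/2) 1 = 1)).
    { intros x Hx; unfold Rmin; destruct Rle_dec; lra. }
    destruct (Hmc _ Rc) as [[c1 c2] [c3 c4]].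
    destruct (Hmc _ Rd) as [[d1 d2] [d3 d4]].
    assert (p1 : 0 <= Rmin (ival c + del/2) 1) by lra.
    assert (q1 : 0 <= Rmin (ival d + del/2) 1) by lra.
    set (c' := mkI01 _ p1 c2). set (d' := mkI01 _ q1 d2).
    pose proof (mp2 _ _ _ _ _
       (A2 (I01_compl c') ltac:(simpl; destruct c4; [left|right]; lra))
       (B2 (I01_compl d') ltac:(simpl; destruct d4; [left|right]; lra))
       (ax_odot2 Tn Th a b (I01_compl c') (I01_compl d'))) as H.
    apply (weaken _ _ _ _ _ _ H). simpl.
    replace (1 - (1 - Rmin (ival c + del / 2) 1)) with (Rmin (ival c + del / 2) 1) by ring.
    replace (1 - (1 - Rmin (ival d + del / 2) 1)) with (Rmin (ival d + del / 2) 1) by ring.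
    assert (Hr := Hc _ _ (conj p1 c2) (conj q1 d2)
                   ltac:(apply Rabs_def1; lra) ltac:(apply Rabs_def1; lra)).
    apply Rabs_def2 in Hr. lra.
  -
    assert (H1 : LGI_prov Tn Th (GI BTop I01_1 (BNeg BBot))).
    { apply (trans _ _ _ (BNeg (BNeg BTop)) _ I01_1 I01_1 _ (ax_neg3 _ _ _)
         (mp _ _ _ _ (ax_bot _ _ (BNeg BTop)) (ax_neg1 _ _ _ _ _))). simpl; lra. }
    pose proof (mp _ _ _ _ (A2 t ltac:(left; lra)) (ax_neg1 Tn Th a BBot t)) as H2.
    apply (trans _ _ _ _ _ _ _ _ H1 H2). simpl; lra.
  -
    assert (H1 : LGI_prov Tn Th (GI (BNeg BTop) I01_1 BBot)).
    { apply (trans _ _ _ (BNeg (BNeg BBot)) _ I01_1 I01_1 _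
         (mp _ _ _ _ (ax_top _ _ (BNeg BBot)) (ax_neg1 _ _ _ _ _)) (ax_neg2 _ _ _)). simpl; lra. }
    assert (H2 := A1 (I01_compl t) ltac:(simpl; lra)).
    pose proof (mp _ _ _ _ H2 (ax_neg1 Tn Th BTop a _)) as H3.
    apply (trans _ _ _ _ _ _ _ _ H3 H1). simpl; lra.
Qed.
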